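(* Let $r\ge 2$ and $n=3(r-1)$. Then there exist an $n$-partite quantum state, two two-outcome measurements for each party, and a linear output-input post-selection (functions $g_j(\mathbf{x},\mathbf{m}^{\setminus j})$) such that the post-selected correlator satisfies $p(1|\mathbf{x})=\delta^1_{f(\mathbf{x})}$ for all $\mathbf{x}\in\{0,1\}^r$, where $f(\mathbf{x})=\prod_{k=1}^r x_k$; i.e. this vertex of $\mathcal{P}_{\mathbf{x}}$ belongs to $\mathcal{Q}^n_{\mathbf{x},\mathbf{m}}$.
   Context: $(n,2,2)$ quantum Bell scenario: parties share a state $\rho$ on $\mathcal{H}_1\otimes\cdots\otimes\mathcal{H}_n$; party $j$ gets input $s_j\in\{0,1\}$, chosen uniformly and independently of everything else, performs a two-outcome POVM depending on $s_j$ and outputs $m_j\in\{0,1\}$, with $p(\mathbf{m}|\mathbf{s})=\mathrm{Tr}[\rho\bigotimes_j E^{(j)}_{m_j|s_j}]$. An experimenter holds $\mathbf{x}\in\{0,1\}^r$. Linear output-input post-selection: fix, for each $j$, a linear Boolean function $g_j$ (of the form $\bigoplus a_k y_k\oplus b$) of the bits of $\mathbf{x}$ and of $\mathbf{m}^{\setminus j}=(m_i)_{i\ne j}$; the post-selected correlator is $p(1|\mathbf{x})=\Pr[\bigoplus_j m_j=1\mid s_j=g_j(\mathbf{x},\mathbf{m}^{\setminus j})\ \forall j]$. $\mathcal{P}_{\mathbf{x}}$ is the convex hull of vectors $(\delta^1_{F(\mathbf{x})})_{\mathbf{x}}$ over all Boolean $F$, and $\mathcal{Q}^n_{\mathbf{x},\mathbf{m}}$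 is the set of post-selected quantum correlator vectors obtainable with $n$ parties and such post-selections. *)

(* Defs.v *)
From HB Require Import structures.
From mathcomp Require Import all_boot all_order all_algebra algC.
Set Implicit Arguments. Unset Strict Implicit. Unset Printing Implicit Defensive.
Import Order.TTheory GRing.Theory Num.Theory.
Local Open Scope ring_scope.

(* Computational basis of (C^d)^{\otimes n}: tuples of local basis indices. *)
Definition basis (n d : nat) := {ffun 'I_n -> 'I_d}.

Definition op (n d : nat) := 'M[algC]_(#|{: basis n d}|).

Definition tens (n d : nat) (E : 'I_n -> 'M[algC]_d) : op n d :=
  \matrix_(i, k) \prod_(j < n) E j ((enum_val i : basis n d) j) ((enum_val k : basis n d) j).

Definition psd (N : nat) (A : 'M[algC]_N) : Prop :=
  forall v : 'cV[algC]_N, 0 <= ((map_mx (fun z => z^*) v)^T *m A *m v) 0 0.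

Definition density (n d : nat) (rho : op n d) : Prop :=
  psd rho /\ \tr rho = 1.

(* A family of local measurements: E s m is the POVM element for outcome m
   given input s; two two-outcome POVMs (s = false/true). *)
Definition two_povms (d : nat) (E : bool -> bool -> 'M[algC]_d) : Prop :=
  (forall s m, psd (E s m)) /\ (forall s, E s false + E s true = 1%:M).

Definition qprob (n d : nat) (rho : op n d)
    (E : 'I_n -> bool -> bool -> 'M[algC]_d)
    (m s : {ffun 'I_n -> bool}) : algC :=
  \tr (rho *m tens (fun j => E j (s j) (m j))).

Definition linpost (r n : nat) (a : 'I_n -> 'I_r -> bool)
    (c : 'I_n -> 'I_n -> bool) (b : 'I_n -> bool)
    (j : 'I_n) (x : {ffun 'I_r -> bool}) (m : {ffun 'I_n -> bool}) : bool :=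
  (\big[addb/false]_(k < r) (a j k && x k))
  (+) (\big[addb/false]_(i < n | i != j) (c j i && m i))
  (+) b j.

(* Probability (inputs uniform and independent) of the post-selection event
   {s_j = g_j(x, m^{\j}) for all j} intersected with the event P on outputs. *)
Definition postprob (r n d : nat) (rho : op n d)
    (E : 'I_n -> bool -> bool -> 'M[algC]_d)
    (g : 'I_n -> {ffun 'I_r -> bool} -> {ffun 'I_n -> bool} -> bool)
    (x : {ffun 'I_r -> bool}) (P : {ffun 'I_n -> bool} -> bool) : algC :=
  \sum_(s : {ffun 'I_n -> bool})
   \sum_(m : {ffun 'I_n -> bool} | [forall j, s j == g j x m] && P m)
     (2 ^- n) * qprob rho E m s.

Definition parity (n : nat) (m : {ffun 'I_n -> bool}) : bool :=
  \big[addb/false]_(j < n) m j.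

Definition postcorr (r n d : nat) (rho : op n d)
    (E : 'I_n -> bool -> bool -> 'M[algC]_d)
    (g : 'I_n -> {ffun 'I_r -> bool} -> {ffun 'I_n -> bool} -> bool)
    (x : {ffun 'I_r -> bool}) : algC :=
  postprob rho E g x (fun m => parity m) / postprob rho E g x (fun _ => true).

Definition delta1 (b : bool) : algC := if b then 1 else 0.

Definition andall (r : nat) (x : {ffun 'I_r -> bool}) : bool :=
  [forall k, x k].

(* Main.v *)
Require Import Defs.
From mathcomp Require Import all_boot all_order all_algebra algC zify.
Set Implicit Arguments. Unset Strict Implicit. Unset Printing Implicit Defensive.
Import Order.TTheory GRing.Theory Num.Theory.
Local Open Scope ring_scope.

(* Classical construction: shared randomness (diagonal state) + deterministic
   local responses; linear output-input post-selection does the rest. *)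

Lemma psd_diag (N : nat) (w : 'rV[algC]_N) :
  (forall i, 0 <= w 0 i) -> psd (diag_mx w).
Proof.
move=> hw v; rewrite mul_mx_diag !mxE.
apply: sumr_ge0 => i _; rewrite !mxE.
rewrite [_ * v i 0]mulrC mulrA; apply: mulr_ge0; last exact: hw.
exact: mul_conjC_ge0.
Qed.

Lemma tr_diag_mul (N : nat) (w : 'rV[algC]_N) (T : 'M_N) :
  \tr (diag_mx w *m T) = \sum_i w 0 i * T i i.
Proof. by rewrite mul_diag_mx /mxtrace; apply: eq_bigr => i _; rewrite mxE. Qed.

Lemma sum_enum_val (T : finType) (F : T -> algC) :
  \sum_(i < #|{: T}|) F (enum_val i) = \sum_t F t.
Proof. exact: (esym (big_enum_val (A:=predT) F)). Qed.

Definition cst (n d : nat) (l : 'I_d) : basis n d := [ffun _ => l].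
Definition wv (n d : nat) : 'rV[algC]_(#|{: basis n d}|) :=
  \row_i \sum_(l : 'I_d) (enum_val i == cst n l)%:R / d%:R.
Definition rhoM (n d : nat) : op n d := diag_mx (wv n d).
Definition EM (n d : nat) (resp : 'I_n -> 'I_d -> bool -> bool)
  (j : 'I_n) (s m : bool) : 'M[algC]_d :=
  diag_mx (\row_(u < d) (resp j u s == m)%:R).

Lemma wv_ge0 n d i : 0 <= wv n d 0 i.
Proof. rewrite mxE; apply: sumr_ge0 => l _; apply: divr_ge0 => //; exact: ler0n. Qed.

Lemma density_rhoM n d : (0 < d)%N -> density (rhoM n d).
Proof.
move=> d0; split; first exact/psd_diag/wv_ge0.
rewrite /rhoM /mxtrace.
under eq_bigr => i _ do rewrite !mxE eqxx mulr1n.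
have := sum_enum_val (fun f : basis n d => \sum_(l : 'I_d) (f == cst n l)%:R / d%:R).
move=> /= ->.
rewrite exchange_big /=.
have inner l : \sum_(f : basis n d) (f == cst n l)%:R / d%:R = d%:R^-1 :> algC.
  rewrite (bigD1 (cst n l)) //= eqxx big1 ?addr0 ?mul1r //.
  by move=> f /negbTE ->; rewrite mul0r.
under eq_bigr => l _ do rewrite inner.
by rewrite sumr_const card_ord -[_ *+ d]mulr_natr mulVf // pnatr_eq0 -lt0n.
Qed.

Lemma povm_EM n d resp j : two_povms (@EM n d resp j).
Proof.
split.
  move=> s m; apply: psd_diag => i; rewrite mxE; exact: ler0n.
move=> s; apply/matrixP => u v; rewrite !mxE.
by case: (u == v); case: (resp j u s) => //=; rewrite ?mulr1n ?mulr0n ?addr0 ?add0r.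
Qed.

Lemma EM_diag n d resp j s m u : @EM n d resp j s m u u = (resp j u s == m)%:R.
Proof. by rewrite /EM !mxE eqxx mulr1n. Qed.

Lemma prod_EM n d resp (m s : {ffun 'I_n -> bool}) (f : basis n d) :
  \prod_j @EM n d resp j (s j) (m j) (f j) (f j) = \prod_j (resp j (f j) (s j) == m j)%:R.
Proof. by apply: eq_bigr => j _; rewrite EM_diag. Qed.

Lemma qprob_EM n d resp (m s : {ffun 'I_n -> bool}) :
  qprob (rhoM n d) (EM resp) m s =
  \sum_(l : 'I_d) d%:R^-1 * \prod_j (resp j l (s j) == m j)%:R.
Proof.
rewrite /qprob /rhoM tr_diag_mul.
under eq_bigr => i _ do rewrite !mxE.
under eq_bigr => i _ do rewrite prod_EM.
have := sum_enum_val (fun f : basis n d => (\sum_(l : 'I_d) (f == cst n l)%:R / d%:R) *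
   \prod_j (resp j (f j) (s j) == m j)%:R).
move=> /= ->.
under eq_bigr => f _ do rewrite mulr_suml.
rewrite exchange_big /=; apply: eq_bigr => l _.
rewrite (bigD1 (cst n l)) //= eqxx mul1r [X in _ + X]big1 ?addr0.
  by congr (_ * _); apply: eq_bigr => j _; rewrite ffunE.
by move=> f /negbTE ->; rewrite mul0r mul0r.
Qed.

Lemma qprob_ge0 n d resp (m s : {ffun 'I_n -> bool}) :
  0 <= qprob (rhoM n d) (EM resp) m s.
Proof.
rewrite qprob_EM; apply: sumr_ge0 => l _; apply: mulr_ge0.
  by rewrite invr_ge0 ler0n.
by apply: prodr_ge0 => j _; exact: ler0n.
Qed.

Definition aC (r n : nat) (j : 'I_n) (k : 'I_r) : bool := (val j == val k).
Definition cC (n : nat) (j i : 'I_n) : bool := true.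
Definition bC (n : nat) (j : 'I_n) : bool := false.

Definition Xs (r n : nat) (j : 'I_n) (x : {ffun 'I_r -> bool}) : bool :=
  \big[addb/false]_(k < r) (aC j k && x k).

Lemma Xs_in r n (j : 'I_n) (k : 'I_r) x : val j = val k -> Xs j x = x k.
Proof.
move=> e; rewrite /Xs (bigD1 k) //= /aC e eqxx /= big1 ?addbF //.
by move=> i ik; rewrite -e; case: eqP => //= ei; case/eqP: ik; apply: val_inj; rewrite /= -ei e.
Qed.

Lemma Xs_out r n (j : 'I_n) (x : {ffun 'I_r -> bool}) : (r <= val j)%N -> Xs j x = false.
Proof.
move=> h; rewrite /Xs big1 // => k _; rewrite /aC.
case: eqP => //= e; have := ltn_ord k; by rewrite -e ltnNge h.
Qed.

Lemma rest_parity n (m : {ffun 'I_n -> bool}) (j : 'I_n) :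
  \big[addb/false]_(i < n | i != j) (cC j i && m i) = parity m (+) m j.
Proof.
rewrite /parity [in RHS](bigD1 j) //= /cC.
by rewrite [RHS]addbC addbA addbb.
Qed.

Lemma linpostE r n x m (j : 'I_n) :
  linpost (@aC r n) (@cC n) (@bC n) j x m = Xs j x (+) (parity m (+) m j).
Proof. by rewrite /linpost rest_parity /bC addbF. Qed.

Definition respC (r n : nat) (j : 'I_n) (l : 'I_r.+1) (s : bool) : bool :=
  if val l == 0%N then (if (val j < r)%N then s else ~~ s)
  else if (val j == (val l).-1) || (val j == r) then s else false.

Definition gC r n := linpost (@aC r n) (@cC n) (@bC n).
Arguments gC {r n}.

Lemma cons_parity r n (hrn : (r < n)%N) (l : 'I_r.+1) (x : {ffun 'I_r -> bool}) (m : {ffun 'I_n -> bool}) :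
  (forall j, respC j l (gC j x m) = m j) -> parity m = andall x.
Proof.
move=> h; pose jr := Ordinal hrn.
have H := h jr; rewrite /gC linpostE Xs_out //= in H.
rewrite /respC /= ltnn eqxx orbT in H.
case: eqP H => l0 H.
  have HP : parity m = true by move: H; case: (parity m); case: (m jr).
  rewrite HP; apply/esym/forallP => k.
  have jk : (val k < n)%N by apply: ltn_trans (ltn_ord k) hrn.
  have Hk := h (Ordinal jk); rewrite /gC linpostE (@Xs_in r n _ k) // in Hk.
  rewrite /respC /= l0 /= (ltn_ord k) in Hk.
  by move: Hk; rewrite HP; case: (x k); case: (m _).
have HP : parity m = false by move: H; case: (parity m); case: (m jr).
have lk : ((val l).-1 < r)%N.
  have h1 := ltn_ord l; have h2 : (val l != 0)%N by apply/eqP. simpl in *; lia.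
pose k := Ordinal lk.
have jk : (val k < n)%N by apply: ltn_trans (ltn_ord k) hrn.
have Hk := h (Ordinal jk); rewrite /gC linpostE (@Xs_in r n _ k) // in Hk.
move/eqP/negbTE: l0 => l0.
rewrite /respC l0 /= eqxx /= in Hk.
have xk : x k = false by move: Hk; rewrite HP; case: (x k); case: (m _).
rewrite HP; apply/esym/negbTE; apply/forallP => /(_ k); by rewrite xk.
Qed.

Lemma cons_exists r n (hrn : (r < n)%N) (x : {ffun 'I_r -> bool}) :
  exists (l : 'I_r.+1) (m : {ffun 'I_n -> bool}),
    forall j, respC j l (gC j x m) = m j.
Proof.
pose jr := Ordinal hrn.
case: (boolP (andall x)) => hx.
  exists ord0, [ffun i => i == jr].
  have HP : parity [ffun i => i == jr] = true.
    rewrite /parity (bigD1 jr) //= ffunE eqxx big1 //.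
    by move=> i /negbTE; rewrite ffunE.
  move=> j; rewrite /gC linpostE HP /respC /=.
  case: ltnP => hj.
    rewrite (@Xs_in r n _ (Ordinal hj)) //.
    by move/forallP: hx => ->; case: (_ j).
  by rewrite Xs_out //; case: (_ j).
move/forallPn: hx => [k hk].
have lk : (k.+1 < r.+1)%N by rewrite ltnS.
pose mf : {ffun 'I_n -> bool} := [ffun => false].
exists (Ordinal lk), mf.
have HP : parity mf = false by rewrite /parity big1 // => i _; rewrite ffunE.
move=> j; rewrite /gC linpostE HP /respC /= /mf ffunE.
case: (boolP (val j == k)) => /= hjk.
  by rewrite (@Xs_in r n _ k) ?addbF ?(negbTE hk) //; apply/eqP.
case: ifP => // hjr.
by rewrite Xs_out ?addbF //; apply: eq_leq; apply/esym/eqP.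
Qed.

Lemma sum_ge_term (I : finType) (P : pred I) (F : I -> algC) i :
  P i -> (forall j, P j -> 0 <= F j) -> F i <= \sum_(j | P j) F j.
Proof.
move=> Pi hF; rewrite (bigD1 i) //= lerDl; apply: sumr_ge0 => j /andP [pj _].
exact: hF.
Qed.

Theorem lemma4p2p1 (r : nat) (hr : (2 <= r)%N) :
  let n := (3 * (r - 1))%N in
  exists (d : nat) (rho : op n d) (E : 'I_n -> bool -> bool -> 'M[algC]_d)
         (a : 'I_n -> 'I_r -> bool) (c : 'I_n -> 'I_n -> bool) (b : 'I_n -> bool),
    (0 < d)%N /\ density rho /\ (forall j, two_povms (E j)) /\
    forall x : {ffun 'I_r -> bool},
      postprob rho E (linpost a c b) x (fun _ => true) != 0 /\
      postcorr rho E (linpost a c b) x = delta1 (andall x).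
Proof.
move=> n.
have hrn : (r < n)%N by rewrite /n; lia.
exists r.+1, (rhoM n r.+1), (EM (@respC r n)), (@aC r n), (@cC n), (@bC n).
split=> //; split; first exact: density_rhoM.
split; first by move=> j; exact: povm_EM.
move=> x.
set rho := rhoM n r.+1; set E := EM (@respC r n).
have key : forall (s m : {ffun 'I_n -> bool}),
    [forall j, s j == gC j x m] -> qprob rho E m s != 0 -> parity m = andall x.
  move=> s m hs hq.
  have : ~~ [forall l : 'I_r.+1, \prod_j (respC j l (s j) == m j)%:R == 0 :> algC].
    apply: contra hq => /forallP h; rewrite /rho /E qprob_EM big1 // => l _.
    by rewrite (eqP (h l)) mulr0.
  move=> /forallPn [l hl]; apply: (@cons_parity r n hrn l) => j.
  move/forallP: hs => /(_ j) /eqP <-.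
  case E1: (respC j l (s j) == m j); first exact/eqP.
  exfalso; move/negP: hl; apply; apply/prodf_eq0; exists j => //; by rewrite E1.
pose T := postprob rho E (@gC r n) x (fun _ => true).
have Tpos : 0 < T.
  have [l [m hm]] := cons_exists hrn x.
  pose s := [ffun j => gC j x m].
  have hs : [forall j, s j == gC j x m] by apply/forallP => j; rewrite ffunE.
  apply: (@lt_le_trans _ _ (2 ^- n * qprob rho E m s)).
    apply: mulr_gt0; first by rewrite invr_gt0 exprn_gt0.
    apply: (@lt_le_trans _ _ ((r.+1)%:R^-1 * \prod_j (respC j l (s j) == m j)%:R)).
      rewrite big1 ?mulr1 ?invr_gt0 ?ltr0n // => j _.
      by rewrite ffunE hm eqxx.
    rewrite /rho /E qprob_EM; apply: (@sum_ge_term _ predT (fun l => _)) => // l' _.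
    apply: mulr_ge0; first by rewrite invr_ge0 ler0n.
    by apply: prodr_ge0 => j _; exact: ler0n.
  rewrite /T /postprob (bigD1 s) //= (bigD1 m) /=; last by rewrite hs.
  rewrite -addrA lerDl; apply: addr_ge0.
    apply: sumr_ge0 => m' _; apply: mulr_ge0; first by rewrite invr_ge0 exprn_ge0.
    exact: qprob_ge0.
  apply: sumr_ge0 => s' _; apply: sumr_ge0 => m' _; apply: mulr_ge0; first by rewrite invr_ge0 exprn_ge0.
  exact: qprob_ge0.
have Tn0 : T != 0 by rewrite gt_eqF.
split; first exact: Tn0.
have Hodd : postprob rho E (@gC r n) x (fun m => parity m) = delta1 (andall x) * T.
  rewrite /T /postprob mulr_sumr; apply: eq_bigr => s _; rewrite mulr_sumr.
  rewrite big_mkcond [RHS]big_mkcond; apply: eq_bigr => m _ /=.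
  rewrite andbT; case: (boolP [forall j, s j == gC j x m]) => //= hs.
  case: (boolP (qprob rho E m s == 0)) => hq0.
    by rewrite (eqP hq0) !mulr0 if_same.
  rewrite (key s m hs hq0) /delta1; case: (andall x); by rewrite ?mul1r ?mul0r.
rewrite /postcorr -/(@gC r n) Hodd -/T mulfK //.
Qed.
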